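(* In multihop Peg Duotaire, for every integer $n\ge 0$, the position $11(01)^n$ has nim-value $n+1$.
   Context: Peg Duotaire is an impartial two-player game played on the infinite line of sites indexed by $\mathbb{Z}$, each site holding a peg or being a hole, with finitely many pegs. A word $w\in\{0,1\}^*$ denotes the position in which $w$ is written on consecutive sites ($1$ = peg, $0$ = hole) and all other sites are holes. A hop: for a peg at site $i$, a peg at site $i+d$ and a hole at site $i+2d$ ($d=\pm1$), move the peg from $i$ to $i+2d$ and remove the peg at $i+d$. In the multihop version, a move is a sequence of one or more hops all performed by the same peg. Players alternate moves; a player unable to move loses. The nim-value of a position is the least nonnegative integer not among the nim-values of positions reachable in one move. *)

(* Defs.v *)
From Stdlib Require Import ZArith List Bool.
Import ListNotations.
Open Scope Z_scope.

(* A position: which sites of Z hold a peg (true = peg, false = hole). *)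
Definition position := Z -> bool.

(* The position given by a word w written on sites 0, 1, ..., |w|-1,
   all other sites being holes (positions are translation invariant). *)
Definition word_pos (w : list bool) : position :=
  fun k => if (0 <=? k) && (k <? Z.of_nat (length w))
           then nth (Z.to_nat k) w false else false.

Definition hop (p : position) (i d : Z) (q : position) : Prop :=
  (d = 1 \/ d = -1) /\
  p i = true /\ p (i + d) = true /\ p (i + 2 * d) = false /\
  forall k, q k = if (k =? i) || (k =? i + d) then false
                  else if k =? i + 2 * d then true else p k.

Inductive multihop : position -> Z -> position -> Prop :=
  | mh_one p i d q : hop p i d q -> multihop p i q
  | mh_more p i d r q : hop p i d r -> multihop r (i + 2 * d) q -> multihop p i q.

Definition move (p q : position) : Prop := exists i, multihop p i q.

(* Since every move removes a peg, games from finite positions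
   are finite, so this determines a unique value for each finite position. *)
Inductive nimval : position -> nat -> Prop :=
  | nimval_intro p g :
      (forall h, (h < g)%nat -> exists q, move p q /\ nimval q h) ->
      (forall q, move p q -> exists h, nimval q h /\ h <> g) ->
      nimval p g.

Definition w11_01 (n : nat) : list bool :=
  [true; true] ++ concat (repeat [false; true] n).

(* Main.v *)
Require Import Defs.
From Stdlib Require Import ZArith List Lia Bool.
Import ListNotations.
Open Scope Z_scope.

Definition pat (a m : Z) : position := fun k =>
  (k =? a) || ((a + 1 <=? k) && (k <=? a + 2 * m + 1) && ((k - a) mod 2 =? 1)).

Definition Lp (a m : Z) : position := fun k =>
  (k =? a - 1) || ((a + 3 <=? k) && (k <=? a + 2 * m + 1) && ((k - a) mod 2 =? 1)).

Ltac zl := Z.div_mod_to_equations; lia.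

Ltac bsplit :=
  repeat match goal with
  | |- context [?x =? ?y] => destruct (Z.eqb_spec x y)
  | |- context [?x <=? ?y] => destruct (Z.leb_spec x y)
  | H : context [?x =? ?y] |- _ => destruct (Z.eqb_spec x y)
  | H : context [?x <=? ?y] |- _ => destruct (Z.leb_spec x y)
  end; cbn [orb andb] in *; try discriminate.

Definition noadj (p : position) := forall i, p i = true -> p (i + 1) = false.

Lemma noadj_nohop p i d q : noadj p -> ~ hop p i d q.
Proof.
  intros N [Hd [H1 [H2 _]]]. destruct Hd; subst.
  - rewrite (N i H1) in H2; discriminate.
  - specialize (N (i + -1) H2). replace (i + -1 + 1) with i in N by lia. congruence.
Qed.

Lemma noadj_nomulti p i q : noadj p -> ~ multihop p i q.
Proof.
  intros N H; inversion H; subst; eapply noadj_nohop; eauto.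
Qed.

Lemma noadj_val0 p : noadj p -> nimval p 0.
Proof.
  intros N; constructor.
  - intros h Hh; lia.
  - intros q [i Hm]; exfalso; eapply noadj_nomulti; eauto.
Qed.

Lemma noadj_ext p q : (forall k, p k = q k) -> noadj q -> noadj p.
Proof. intros E N i H. rewrite E in *. auto. Qed.

Lemma noadj_pat a : noadj (pat a (-1)).
Proof. intros i H. unfold pat in *. bsplit; try reflexivity; zl. Qed.

Lemma noadj_L a m : noadj (Lp a m).
Proof. intros i H. unfold Lp in *. bsplit; try reflexivity; zl. Qed.

Lemma hop_class p a m i d r : -1 <= m -> (forall k, p k = pat a m k) -> hop p i d r ->
  (i = a /\ d = 1 /\ 0 <= m /\ forall k, r k = pat (a + 2) (m - 1) k) \/
  (i = a + 1 /\ d = -1 /\ 0 <= m /\ forall k, r k = Lp a m k).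
Proof.
  intros Hm Hp [Hd [H1 [H2 [H3 Hr]]]].
  rewrite !Hp in H1, H2, H3. unfold pat in H1, H2, H3.
  destruct Hd; subst d.
  - left. bsplit; try zl.
    all: split; [lia|split;[lia|split;[lia|]]]; intros k; rewrite Hr, Hp; unfold pat; bsplit; try reflexivity; zl.
  - right. bsplit; try zl.
    all: split; [lia|split;[lia|split;[lia|]]]; intros k; rewrite Hr, Hp; unfold pat, Lp; bsplit; try reflexivity; zl.
Qed.

Lemma multi_class p i q : multihop p i q -> forall a m, -1 <= m -> (forall k, p k = pat a m k) ->
  (i = a /\ exists j, 1 <= j <= m + 1 /\ forall k, q k = pat (a + 2 * j) (m - j) k) \/
  (i = a + 1 /\ 0 <= m /\ forall k, q k = Lp a m k).
Proof.
  induction 1 as [p i d q H | p i d r q H Hm IH]; intros a m Hm1 Hp.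
  - destruct (hop_class p a m i d q Hm1 Hp H) as [[-> [-> [Hm0 E]]]|[-> [-> [Hm0 E]]]].
    + left; split; auto; exists 1; split; [lia|]. intros k; rewrite E; f_equal; lia.
    + right; auto.
  - destruct (hop_class p a m i d r Hm1 Hp H) as [[-> [-> [Hm0 E]]]|[-> [-> [Hm0 E]]]].
    + destruct (IH (a + 2) (m - 1) ltac:(lia) E) as [[_ [j [Hj E2]]]|[Hc _]]; [|lia].
      left; split; auto; exists (j + 1); split; [lia|]. intros k; rewrite E2; f_equal; lia.
    + exfalso. eapply noadj_nomulti; [|exact Hm].
      eapply noadj_ext; [exact E|apply noadj_L].
Qed.

Definition hopres (p : position) (i d : Z) : position := fun k =>
  if (k =? i) || (k =? i + d) then false else if k =? i + 2 * d then true else p k.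

Lemma right_hop p a m : 0 <= m -> (forall k, p k = pat a m k) -> hop p a 1 (hopres p a 1).
Proof.
  intros Hm Hp; repeat split; auto; rewrite !Hp; unfold pat; bsplit; try reflexivity; zl.
Qed.

Lemma left_hop p a m : 0 <= m -> (forall k, p k = pat a m k) -> hop p (a + 1) (-1) (hopres p (a + 1) (-1)).
Proof.
  intros Hm Hp; repeat split; auto; rewrite !Hp; unfold pat; bsplit; try reflexivity; zl.
Qed.

Lemma right_chain (j : nat) : forall p a m, 1 <= Z.of_nat j <= m + 1 -> (forall k, p k = pat a m k) ->
  exists q, multihop p a q /\ forall k, q k = pat (a + 2 * Z.of_nat j) (m - Z.of_nat j) k.
Proof.
  induction j as [|j IH]; intros p a m Hj Hp; [lia|].
  assert (Hh := right_hop p a m ltac:(lia) Hp).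
  destruct (hop_class p a m a 1 _ ltac:(lia) Hp Hh) as [[_ [_ [_ E]]]|[Hc _]]; [|lia].
  destruct j as [|j].
  - exists (hopres p a 1); split; [eapply mh_one; eauto|].
    intros k; rewrite E; f_equal; lia.
  - destruct (IH (hopres p a 1) (a + 2) (m - 1) ltac:(lia) E) as [q [Hq Eq]].
    exists q; split.
    + eapply mh_more; [exact Hh|]. replace (a + 2 * 1) with (a + 2) by lia. exact Hq.
    + intros k; rewrite Eq; f_equal; lia.
Qed.

Lemma main_pat (n : nat) : forall a p, (forall k, p k = pat a (Z.of_nat n) k) -> nimval p (S n).
Proof.
  induction n as [n IH] using (well_founded_induction lt_wf).
  intros a p Hp; constructor.
  - intros h Hh. destruct h as [|h].
    + exists (hopres p (a + 1) (-1)); split.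
      * exists (a + 1); eapply mh_one; eapply left_hop; eauto; lia.
      * apply noadj_val0.
        destruct (hop_class p a (Z.of_nat n) _ _ _ ltac:(lia) Hp (left_hop p a (Z.of_nat n) ltac:(lia) Hp)) as [[Hc _]|[_ [_ [_ E]]]]; [lia|].
        eapply noadj_ext; [exact E|apply noadj_L].
    + destruct (right_chain (n - h) p a (Z.of_nat n) ltac:(lia) Hp) as [q [Hq E]].
      exists q; split; [exists a; exact Hq|].
      apply (IH h ltac:(lia) (a + 2 * Z.of_nat (n - h))).
      intros k; rewrite E; f_equal; lia.
  - intros q [i Hm].
    destruct (multi_class p i q Hm a (Z.of_nat n) ltac:(lia) Hp) as [[_ [j [Hj E]]]|[_ [_ E]]].
    + destruct (Z.eq_dec j (Z.of_nat n + 1)) as [Hjn|Hjn].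
      * exists 0%nat; split; [|lia]. apply noadj_val0. eapply noadj_ext; [exact E|].
        replace (Z.of_nat n - j) with (-1) by lia. apply noadj_pat.
      * exists (S (n - Z.to_nat j)); split; [|lia].
        apply (IH (n - Z.to_nat j)%nat ltac:(lia) (a + 2 * j)).
        intros k; rewrite E; f_equal; lia.
    + exists 0%nat; split; [|lia]. apply noadj_val0. eapply noadj_ext; [exact E|apply noadj_L].
Qed.

Lemma nth_rep (n j : nat) : nth j (concat (repeat [false; true] n)) false =
  (Z.of_nat j <? 2 * Z.of_nat n) && (Z.of_nat j mod 2 =? 1).
Proof.
  revert j; induction n as [|n IH]; intros j.
  - simpl. destruct j; reflexivity.
  - change (concat (repeat [false; true] (S n))) with ([false; true] ++ concat (repeat [false; true] n)).
    destruct j as [|[|j]].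
    + reflexivity.
    + simpl. destruct (Z.ltb_spec 1 (2 * Z.of_nat (S n))); [reflexivity|lia].
    + simpl (nth _ _ _). rewrite IH.
      repeat match goal with
      | |- context [?x =? ?y] => destruct (Z.eqb_spec x y)
      | |- context [?x <? ?y] => destruct (Z.ltb_spec x y)
      end; cbn [andb]; try reflexivity; zl.
Qed.

Ltac bs2 := repeat match goal with
      | |- context [?x =? ?y] => destruct (Z.eqb_spec x y)
      | |- context [?x <? ?y] => destruct (Z.ltb_spec x y)
      | |- context [?x <=? ?y] => destruct (Z.leb_spec x y)
      end; cbn [andb orb nth app length] in *; try reflexivity; try zl.

Lemma word_pat (n : nat) k : word_pos (w11_01 n) k = pat 0 (Z.of_nat n) k.
Proof.
  unfold word_pos, w11_01, pat.
  rewrite length_app, length_concat.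
  assert (Hl : list_sum (map (@length bool) (repeat [false; true] n)) = (2 * n)%nat).
  { induction n as [|n IH]; [reflexivity|]. simpl. simpl in IH. lia. }
  rewrite Hl.
  destruct (Z.leb_spec 0 k); [|bs2].
  destruct (Z.to_nat k) as [|[|j]] eqn:Ek.
  - assert (k = 0) by lia; subst. bs2.
  - assert (k = 1) by lia; subst. bs2.
  - simpl (nth _ _ _). rewrite nth_rep.
    assert (k = Z.of_nat j + 2) by lia; subst.
    repeat match goal with
      | |- context [?x =? ?y] => destruct (Z.eqb_spec x y)
      | |- context [?x <? ?y] => destruct (Z.ltb_spec x y)
      | |- context [?x <=? ?y] => destruct (Z.leb_spec x y)
      end; cbn [andb orb length] in *; try reflexivity; zl.
Qed.

Theorem mainTheorem6 : forall n : nat, nimval (word_pos (w11_01 n)) (S n).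
Proof.
  intros n. apply (main_pat n 0). intros k. apply word_pat.
Qed.
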